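(* Let $n\ge3$ be odd and let $M$ be the sub-add move matrix. Then the length of every directed cycle in $\Gamma_{M,\,n}$ divides $4\varphi(n)$, where $\varphi$ is Euler's totient function.
   Context: The sub-add move matrix is $M=\begin{pmatrix}1&-1\\1&1\end{pmatrix}$. For $n\in\mathbb N$, $\Gamma_{M,\,n}$ is the directed graph with vertex set $\mathbb Z_n^2$ and arcs $((a,b),(a-b,a+b))$ for all $(a,b)\in\mathbb Z_n^2$ (computed mod $n$; loops allowed). A directed cycle is a cycle in the underlying undirected graph such that in the induced directed subgraph every vertex has in-degree and out-degree $1$; a loop counts as a directed $1$-cycle and a pair of opposite arcs as a directed $2$-cycle. *)

(* Defs.v *)
From mathcomp Require Import all_boot all_order all_algebra.
Set Implicit Arguments. Unset Strict Implicit. Unset Printing Implicit Defensive.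
Import GRing.Theory.
Local Open Scope ring_scope.

(* Vertex set Z_n^2 (use only for n >= 2, so that 'Z_n is Z/nZ). *)
(* The sub-add move M = [[1,-1],[1,1]] : (a,b) |-> (a - b, a + b) mod n. *)
Definition subadd_move (n : nat) (v : 'Z_n * 'Z_n) : 'Z_n * 'Z_n :=
  (v.1 - v.2, v.1 + v.2).

Definition Gamma_arc (n : nat) : rel ('Z_n * 'Z_n) :=
  fun u v => subadd_move u == v.

(* A directed cycle of Gamma_{M,n}: a nonempty sequence of pairwise distinct
   vertices v_0, ..., v_{k-1} with arcs v_i -> v_{i+1} and v_{k-1} -> v_0
   (k = 1 is a loop, k = 2 a pair of opposite arcs). *)
Definition directed_cycle (n : nat) (c : seq ('Z_n * 'Z_n)) : bool :=
  [&& c != [::], uniq c & cycle (@Gamma_arc n) c].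

(* Main.v *)
Require Import Defs.
From mathcomp Require Import all_boot all_order all_algebra.
From mathcomp Require Import cyclic.
From mathcomp Require Import ring.
Import GRing.Theory.

Local Open Scope ring_scope.

Lemma iter4 (n : nat) (v : 'Z_n * 'Z_n) :
  iter 4 (@subadd_move n) v = (-4 * v.1, -4 * v.2).
Proof.
case: v => a b; rewrite /= /subadd_move /=; congr (_, _); ring.
Qed.

Lemma iter4m (n : nat) (v : 'Z_n * 'Z_n) j :
  iter (4 * j) (@subadd_move n) v = ((-4) ^+ j * v.1, (-4) ^+ j * v.2).
Proof.
elim: j => [|j IH]; first by case: v => a b /=; rewrite !mul1r.
rewrite mulnS iterD IH iter4 /= !exprS !mulrA.
done.
Qed.

Lemma m4pow (n : nat) : (2 < n)%N -> odd n -> (-4 : 'Z_n) ^+ totient n = 1.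
Proof.
move=> n2 on.
have n1 : (1 < n)%N by apply: ltnW.
have e : (-4 : 'Z_n) = (4 * n.-1)%:R.
  have hn : (n%:R : 'Z_n) = 0 by rewrite -Zp_nat_mod // modnn.
  have -> : (4 * n.-1 = 4 * n - 4)%N by rewrite -subn1 mulnBr muln1.
  rewrite natrB; last by apply: leq_pmulr; apply: leq_trans n2.
  by rewrite natrM hn mulr0 sub0r.
have cop : coprime (4 * n.-1) n.
  rewrite coprimeMl coprimePn ?andbT; last by apply: ltnW; apply: ltnW.
  by rewrite (_ : 4 = 2 ^ 2)%N // coprimeXl // coprime2n.
rewrite e -natrX -Zp_nat_mod // (Euler_exp_totient cop) Zp_nat_mod //.
Qed.

Theorem theorem6p2 (n : nat) (hn : (3 <= n)%N) (hodd : odd n)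
  (c : seq ('Z_n * 'Z_n)) (hc : directed_cycle c) :
  (size c %| 4 * totient n)%N.
Proof.
case/and3P: hc; case: c => [//|x p] _ Up Cp.
set f := @subadd_move n.
have Fp : fcycle f (x :: p).
  by apply: sub_cycle Cp => u v.
have ord : order f x = size (x :: p) by apply: order_cycle; rewrite ?mem_head.
have itk : iter (size (x :: p)) f x = x.
  have := fcycle_rconsE Fp.
  move/(congr1 (last x)); rewrite last_rcons /= last_traject.
  by move=> h; rewrite -iterS iterSr -h.
have itN : iter (4 * totient n) f x = x.
  rewrite iter4m m4pow // !mul1r; by case: x {Cp Up Fp ord itk}.
set k := size (x :: p).
have itq : forall q, iter (q * k) f x = x.
  by elim=> [|q IH] //; rewrite mulSn iterD IH itk.
rewrite /dvdn; apply/eqP.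
have hr : ((4 * totient n) %% k < order f x)%N by rewrite ord ltn_mod.
have := findex_iter hr.
have -> : iter ((4 * totient n) %% k) f x = x.
  by rewrite -[in RHS]itN {2}(divn_eq (4 * totient n) k) addnC iterD itq.
by rewrite findex0.
Qed.
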